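(* The map $\phi_{s'} : \mathbf{ASM} \to \mathbb{K}(q)$ linearly defined, for any $s' \in \{\operatorname{se}, \operatorname{nw}, \operatorname{sw}, \operatorname{ne}\}$ and any ASM $\delta$ of size $n$ by $\phi_{s'}(\mathbf{F}_{M^\delta}) := \frac{q^{s'(\delta)}}{[n]_q!}$ is an algebra morphism.
   Context: Let $\mathbb{K}$ be a field of characteristic zero; $[n]_q := 1 + q + \dots + q^{n-1}$ and $[n]_q! := [1]_q \cdots [n]_q$, $[0]_q! := 1$. An alternating sign matrix (ASM) of size $n$ is an $n\times n$ matrix with entries in $\{0,+,-\}$ (read as $0,1,-1$) such that every row and column starts and ends (ignoring zeros) with $+$ and in each row and column the $+$ and $-$ alternate. For an ASM $\delta$, $M^\delta$ is the $\{0,1\}$-matrix with $M^\delta_{ij}=1$ iff $\delta_{ij}\ne0$. $\mathbf{PM}_1$ is the Hopf algebra with basis $(\mathbf{F}_M)$ indexed by $\{0,1\}$-square matrices with no null row or column, with product $\mathbf{F}_{M_1}\cdot\mathbf{F}_{M_2} = \sum \mathbf{F}_M$ over all $M$ obtained by shuffling the columns of $M_1$ (with an $n_2\times n_1$ zero block placed below) with the columns of $M_2$ (with an $n_1\times n_2$ zero block placed above), $n_i$ the sizes. $\mathbf{ASM}$ is the Hopf subalgebra of $\mathbf{PM}_1$ spanned by the $\mathbf{F}_{M^\delta}$, graded by the size of $\delta$. Each ASM is in bijection with a six-vertex configuration on the $n\times n$ grid with domain wall boundary conditions (horizontal boundary edges point inward, vertical boundary edges point outward); zero entries correspond to the four vertex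 types $\operatorname{ne}$ (vertical edges pointing up, horizontal edges pointing right), $\operatorname{nw}$ (up, left), $\operatorname{se}$ (down, right), $\operatorname{sw}$ (down, left), while $+$ and $-$ entries are the two other vertex types. Equivalently, for a zero entry $\delta_{ij}$, with $r = \sum_{j'<j}\delta_{ij'}$ and $c = \sum_{i'<i}\delta_{i'j}$ (both in $\{0,1\}$), its type is $\operatorname{ne}$ if $(r,c)=(0,0)$, $\operatorname{nw}$ if $(r,c)=(1,0)$, $\operatorname{se}$ if $(r,c)=(0,1)$, $\operatorname{sw}$ if $(r,c)=(1,1)$. For $s'$ among these types, $s'(\delta)$ is the number of vertices of type $s'$ in the configuration of $\delta$. *)

(* Defs.v *)
From HB Require Import structures.
From mathcomp Require Import all_boot all_order all_algebra fraction.
From Stdlib Require Import ClassicalEpsilon.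
Set Implicit Arguments. Unset Strict Implicit. Unset Printing Implicit Defensive.
Import Order.TTheory GRing.Theory Num.Theory.
Local Open Scope ring_scope.

Definition alt_seq (s : seq int) : bool :=
  [&& all (fun x => (x == 1) || (x == -1)) s,
      head 0 s == 1, last 0 s == 1 &
      sorted (fun x y => y == - x) s].

Definition is_asm (n : nat) (d : 'M[int]_n) : bool :=
  [&& [forall i, forall j, (d i j == 0) || (d i j == 1) || (d i j == -1)],
      [forall i, alt_seq [seq d i j | j <- enum 'I_n & d i j != 0]] &
      [forall j, alt_seq [seq d i j | i <- enum 'I_n & d i j != 0]]].

(* M^delta : the {0,1}-matrix (as booleans) of nonzero entries *)
Definition supp (n : nat) (d : 'M[int]_n) : 'M[bool]_n :=
  \matrix_(i, j) (d i j != 0).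

Inductive vtype := ne | nw | se | sw.

Definition vtype_eqb (a b : vtype) : bool :=
  match a, b with
  | ne, ne | nw, nw | se, se | sw, sw => true
  | _, _ => false
  end.

Definition vtype_at (n : nat) (d : 'M[int]_n) (i j : 'I_n) : option vtype :=
  let r := \sum_(j' < n | (j' < j)%N) d i j' in
  let c := \sum_(i' < n | (i' < i)%N) d i' j in
  if (r == 0) && (c == 0) then Some ne
  else if (r == 1) && (c == 0) then Some nw
  else if (r == 0) && (c == 1) then Some se
  else if (r == 1) && (c == 1) then Some sw
  else None.

Definition count_type (s' : vtype) (n : nat) (d : 'M[int]_n) : nat :=
  #|[set ij : 'I_n * 'I_n | (d ij.1 ij.2 == 0) &&
      (match vtype_at d ij.1 ij.2 with
       | Some t => vtype_eqb t s' | None => false end)]|.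

Definition qvar (K : fieldType) : {fraction {poly K}} := FracField.tofrac ('X : {poly K}).

Definition qint (K : fieldType) (n : nat) : {fraction {poly K}} :=
  \sum_(i < n) qvar K ^+ i.

Definition qfact (K : fieldType) (n : nat) : {fraction {poly K}} :=
  \prod_(i < n) qint K i.+1.

Definition phiASM (K : fieldType) (s' : vtype) (n : nat) (d : 'M[int]_n)
  : {fraction {poly K}} :=
  qvar K ^+ count_type s' d / qfact K n.

(* phi_{s'} on a basis element F_M of ASM, M = M^delta: choose the ASM delta
   with M^delta = M (it is unique); value 0 if M is not an ASM support
   (such F_M are not in ASM, so this value is irrelevant). *)
Definition phiPM (K : fieldType) (s' : vtype) (n : nat) (M : 'M[bool]_n)
  : {fraction {poly K}} :=
  let d := epsilon (inhabits (0 : 'M[int]_n))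
                   (fun d => is_asm d && (supp d == M)) in
  if is_asm d && (supp d == M) then phiASM K s' d else 0.

(* The shuffle determined by the set S of positions (among n1+n2 columns)
   receiving the columns of M1 (in order); the remaining positions receive
   the columns of M2 (in order).  Rows < n1 belong to M1 (zero block below
   for M2's columns), rows >= n1 to M2. *)
Definition shuffle (n1 n2 : nat) (S : {set 'I_(n1 + n2)})
  (M1 : 'M[bool]_n1) (M2 : 'M[bool]_n2) : 'M[bool]_(n1 + n2) :=
  \matrix_(i, j)
    match split i with
    | inl i1 => (j \in S) &&
        match insub #|[set x in S | (x < j)%N]| with
        | Some k => M1 i1 k | None => false end
    | inr i2 => (j \notin S) &&
        match insub #|[set x in ~: S | (x < j)%N]| with
        | Some k => M2 i2 k | None => false end
    end.

(* Main.v *)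
Require Import Defs.
From HB Require Import structures.
From mathcomp Require Import all_boot all_order all_algebra fraction.
From Stdlib Require Import ClassicalEpsilon.
From mathcomp Require Import zify ring.
Set Implicit Arguments. Unset Strict Implicit. Unset Printing Implicit Defensive.
Import Order.TTheory GRing.Theory Num.Theory.
Local Open Scope ring_scope.

Definition ralt := fun x y : int => y == - x.

Lemma path_uniq (x : int) (s t : seq int) :
  path ralt x s -> path ralt x t -> size s = size t -> s = t.
Proof.
elim: s x t => [|y s IH] x [|z t] //= /andP[/eqP hy ps] /andP[/eqP hz pt] [hst].
by subst; rewrite (IH _ _ ps pt hst).
Qed.

Lemma alt_uniq s t : alt_seq s -> alt_seq t -> size s = size t -> s = t.
Proof.
case: s => [|x s]; first by case/and4P.
case: t => [|y t]; first by case/and4P.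
move=> /and4P[_ /= /eqP hx _ ps] /and4P[_ /= /eqP hy _ pt] [hst].
by subst; rewrite (path_uniq ps pt hst).
Qed.

Lemma path_take (x : int) s : path ralt x s ->
  forall m, (\sum_(z <- take m (x :: s)) z == 0) || (\sum_(z <- take m (x :: s)) z == x).
Proof.
elim: s x => [|y s IH] x /=.
  by move=> _ [|[|m]] /=; rewrite ?big_nil ?big_cons ?big_nil ?addr0 //=; apply/orP; right.
move=> /andP[/eqP hy ps] [|m]; first by rewrite big_nil eqxx.
rewrite big_cons; have := IH _ ps m; subst y.
case/orP=> /eqP ->; first by rewrite addr0; apply/orP; right.
have -> : x - x = 0 by apply/eqP; rewrite subr_eq0.
by rewrite eqxx.
Qed.

Lemma path_total (x : int) s : path ralt x s ->
  \sum_(z <- x :: s) z = (if odd (size s) then 0 else x) /\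
  last x s = (if odd (size s) then - x else x).
Proof.
elim: s x => [|y s IH] x /=; first by rewrite big_cons big_nil addr0.
move=> /andP[/eqP hy ps]; subst y; have [h1 h2] := IH _ ps.
rewrite big_cons h1 h2; case: (odd (size s)) => /=; split => //.
  by rewrite addr0.
  by rewrite opprK.
by rewrite subrr.
Qed.

Lemma alt_sum s : alt_seq s -> \sum_(z <- s) z = 1.
Proof.
case: s => [|x s]; first by case/and4P.
move=> /and4P[_ /= /eqP hx /eqP hl ps]; subst x.
have [h1 h2] := path_total ps; rewrite h1; move: hl; rewrite h2.
by case: (odd (size s)).
Qed.

Lemma alt_take s m : alt_seq s ->
  (\sum_(z <- take m s) z == 0) || (\sum_(z <- take m s) z == 1).
Proof.
case: s => [|x s]; first by case/and4P.
move=> /and4P[_ /= /eqP hx _ ps]; subst x.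
exact: path_take ps m.
Qed.

Lemma alt_all s : alt_seq s -> all (fun x => (x == 1) || (x == -1)) s.
Proof. by case/and4P. Qed.

Lemma supp_uniq n (d d' : 'M[int]_n) : is_asm d -> is_asm d' -> supp d = supp d' -> d = d'.
Proof.
move=> /and3P[_ /forallP hr _] /and3P[_ /forallP hr' _] hs.
apply/matrixP => i j.
have hz : forall j, (d i j != 0) = (d' i j != 0).
  by move=> k; have := congr1 (fun M : 'M[bool]_n => M i k) hs; rewrite !mxE.
have := hr i; have := hr' i.
rewrite (eq_filter (a1 := fun j => d' i j != 0) (a2 := fun j => d i j != 0)); last first.
  by move=> k; rewrite hz.
move=> a' a; have := alt_uniq a a'; rewrite !size_map => /(_ erefl) /eq_in_map h.
case: (d i j =P 0) => [e|/eqP ne].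
  rewrite e; apply/esym/eqP; move: (hz j); rewrite e eqxx /=.
  by case: (d' i j == 0).
by apply: h; rewrite mem_filter ne mem_enum.
Qed.

Lemma phiPM_supp K s' n (d : 'M[int]_n) : is_asm d -> phiPM K s' (supp d) = phiASM K s' d.
Proof.
move=> hd; rewrite /phiPM.
have h : exists x, (fun d0 : 'M[int]_n => is_asm d0 && (supp d0 == supp d)) x.
  by exists d; rewrite hd eqxx.
move: (epsilon_spec (inhabits (0 : 'M[int]_n)) _ h).
by case/andP=> he /eqP hs; rewrite he hs eqxx /= (supp_uniq he hd hs).
Qed.
Definition E n (d : 'M[int]_n) (i j : nat) : int :=
  match (insub i : option 'I_n), (insub j : option 'I_n) with
  | Some a, Some b => d a b | _, _ => 0 end.

Lemma E_ord n (d : 'M[int]_n) (a b : 'I_n) : E d a b = d a b.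
Proof. by rewrite /E !valK. Qed.

Lemma E_outl n (d : 'M[int]_n) i j : (n <= i)%N -> E d i j = 0.
Proof. by move=> h; rewrite /E insubN // -leqNgt. Qed.

Lemma E_outr n (d : 'M[int]_n) i j : (n <= j)%N -> E d i j = 0.
Proof.
move=> h; rewrite /E; case: insubP => [a _ _|//].
by case: insubP => [b hb _|//]; rewrite ltnNge h in hb.
Qed.

Definition rk (w : nat -> bool) (j : nat) : nat := (\sum_(0 <= a < j) (w a : nat))%N.
Definition rkc (w : nat -> bool) (j : nat) : nat := rk (fun a => ~~ w a) j.

Lemma rkS (w : nat -> bool) j : rk w j.+1 = (rk w j + w j)%N.
Proof. by rewrite /rk big_nat_recr. Qed.

Lemma rk0 (w : nat -> bool) : rk w 0 = 0%N.
Proof. by rewrite /rk big_geq. Qed.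

Lemma rk_rkc (w : nat -> bool) j : (rk w j + rkc w j = j)%N.
Proof.
elim: j => [|j IH]; first by rewrite /rkc !rk0.
rewrite /rkc !rkS -/(rkc w j) addnACA IH.
by case: (w j); rewrite /= ?addn1 ?addn0.
Qed.

Lemma rk_mono (w : nat -> bool) a b : (a <= b)%N -> (rk w a <= rk w b)%N.
Proof.
move=> h; rewrite /rk (big_cat_nat (leq0n a) h) /=; exact: leq_addr.
Qed.

Lemma rk_lt (w : nat -> bool) j J : w j -> (j < J)%N -> (rk w j < rk w J)%N.
Proof.
move=> hw hj; apply: (leq_trans _ (rk_mono w hj)).
by rewrite rkS hw addn1.
Qed.

Lemma eq_rk (w : nat -> bool) w' J : (forall a, (a < J)%N -> w a = w' a) ->
  forall j, (j <= J)%N -> rk w j = rk w' j.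
Proof.
move=> h j hj; apply: eq_big_nat => a /andP[_ ha]; rewrite h //.
exact: leq_trans ha hj.
Qed.

Lemma rk_ltn n j : rk (fun a => (a < n)%N) j = minn j n.
Proof.
elim: j => [|j IH]; first by rewrite rk0 min0n.
rewrite rkS IH; case: (ltnP j n) => h.
  by rewrite addn1; lia.
by rewrite addn0; lia.
Qed.

Lemma rk_geq n j : rk (fun a => (n <= a)%N) j = (j - n)%N.
Proof.
elim: j => [|j IH]; first by rewrite rk0.
rewrite rkS IH; case: (leqP n j) => h.
  by rewrite addn1; lia.
by rewrite addn0; lia.
Qed.

Lemma filt_rk (f g : nat -> int) (w : nat -> bool) J :
  (forall j, (j < J)%N -> f j = if w j then g (rk w j) else 0) ->
  [seq f j | j <- iota 0 J & f j != 0] = [seq g k | k <- iota 0 (rk w J) & g k != 0].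
Proof.
elim: J => [|J IH] h; first by rewrite rk0.
rewrite -addn1 iotaD filter_cat map_cat IH; last by move=> j hj; apply: h; rewrite ltnS ltnW.
rewrite add0n addn1 rkS /= h //.
case hw: (w J) => /=; last by rewrite ?eqxx /= cats0 addn0.
rewrite iotaD filter_cat map_cat add0n /=; case: ifP => //= _.
by rewrite h // hw.
Qed.

Lemma sum_rk_int (w : nat -> bool) (g : nat -> int) J :
  \sum_(0 <= j < J) (if w j then g (rk w j) else 0) = \sum_(0 <= k < rk w J) g k.
Proof.
elim: J => [|J IH]; first by rewrite rk0 !big_geq.
rewrite big_nat_recr //= IH rkS; case: (w J) => /=.
  by rewrite addn1 big_nat_recr.
by rewrite addr0 addn0.
Qed.

Lemma sum_rk_nat (w : nat -> bool) (g : nat -> nat) J :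
  (\sum_(0 <= j < J) (if w j then g (rk w j) else 0) = \sum_(0 <= k < rk w J) g k)%N.
Proof.
elim: J => [|J IH]; first by rewrite rk0 !big_geq.
rewrite big_nat_recr //= IH rkS; case: (w J) => /=.
  by rewrite addn1 big_nat_recr.
by rewrite addn0 addn0.
Qed.

Lemma rowseqE n (d : 'M[int]_n) (i : 'I_n) :
  [seq d i j | j <- enum 'I_n & d i j != 0] = [seq E d i k | k <- iota 0 n & E d i k != 0].
Proof.
rewrite -val_enum_ord filter_map -map_comp.
have h : forall j : 'I_n, E d i j = d i j by move=> j; rewrite E_ord.
rewrite (eq_filter (a2 := fun j => d i j != 0)); last by move=> j /=; rewrite h.
by apply: eq_map => j /=; rewrite h.
Qed.

Lemma colseqE n (d : 'M[int]_n) (j : 'I_n) :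
  [seq d i j | i <- enum 'I_n & d i j != 0] = [seq E d k j | k <- iota 0 n & E d k j != 0].
Proof.
rewrite -val_enum_ord filter_map -map_comp.
have h : forall i : 'I_n, E d i j = d i j by move=> i; rewrite E_ord.
rewrite (eq_filter (a2 := fun i => d i j != 0)); last by move=> i /=; rewrite h.
by apply: eq_map => i /=; rewrite h.
Qed.

Lemma sum_filt (F : nat -> int) l :
  \sum_(k <- l) F k = \sum_(z <- [seq F k | k <- l & F k != 0]) z.
Proof.
rewrite big_map big_filter [RHS]big_mkcond; apply: eq_bigr => k _.
by case: eqP => // ->.
Qed.

Definition Pr (f : nat -> nat -> int) i m := \sum_(0 <= a < m) f i a.
Definition Pc (f : nat -> nat -> int) j m := \sum_(0 <= a < m) f a j.

Lemma pref_take (F : nat -> int) n m : (m <= n)%N ->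
  exists c, \sum_(0 <= a < m) F a =
   \sum_(z <- take c [seq F k | k <- iota 0 n & F k != 0]) z.
Proof.
move=> h; rewrite -(subnKC h) iotaD filter_cat map_cat.
exists (size [seq F k | k <- iota 0 m & F k != 0]).
by rewrite take_size_cat // -sum_filt /index_iota subn0.
Qed.

Lemma asm_row_pref n (d : 'M[int]_n) i m : is_asm d -> (i < n)%N -> (m <= n)%N ->
  (Pr (E d) i m == 0) || (Pr (E d) i m == 1).
Proof.
move=> /and3P[_ /forallP hr _] hi hm.
have := hr (Ordinal hi); rewrite rowseqE /= => ha.
rewrite /Pr; have [c ->] := pref_take (E d i) hm; exact: alt_take.
Qed.

Lemma asm_col_pref n (d : 'M[int]_n) j m : is_asm d -> (j < n)%N -> (m <= n)%N ->
  (Pc (E d) j m == 0) || (Pc (E d) j m == 1).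
Proof.
move=> /and3P[_ _ /forallP hr] hi hm.
have := hr (Ordinal hi); rewrite colseqE /= => ha.
rewrite /Pc; have [c ->] := pref_take (fun k => E d k j) hm; exact: alt_take.
Qed.

Lemma asm_col_tot n (d : 'M[int]_n) j : is_asm d -> (j < n)%N -> Pc (E d) j n = 1.
Proof.
move=> /and3P[_ _ /forallP hr] hi.
have := hr (Ordinal hi); rewrite colseqE /= => ha.
by rewrite /Pc /index_iota subn0 sum_filt alt_sum.
Qed.

Lemma asm_row_tot n (d : 'M[int]_n) i : is_asm d -> (i < n)%N -> Pr (E d) i n = 1.
Proof.
move=> /and3P[_ /forallP hr _] hi.
have := hr (Ordinal hi); rewrite rowseqE /= => ha.
by rewrite /Pr /index_iota subn0 sum_filt alt_sum.
Qed.

Lemma asm_entry n (d : 'M[int]_n) i j : is_asm d ->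
  (E d i j == 0) || (E d i j == 1) || (E d i j == -1).
Proof.
move=> /and3P[/forallP he _ _].
rewrite /E; case: insubP => [a _ _|_]; last by rewrite eqxx.
case: insubP => [b _ _|_]; last by rewrite eqxx.
by have /forallP := he a; apply.
Qed.

Definition ws N (S : {set 'I_N}) (j : nat) : bool :=
  if (insub j : option 'I_N) is Some x then x \in S else false.

Lemma ws_ord N (S : {set 'I_N}) (x : 'I_N) : ws S x = (x \in S).
Proof. by rewrite /ws valK. Qed.

Lemma ws_out N (S : {set 'I_N}) j : (N <= j)%N -> ws S j = false.
Proof. by move=> h; rewrite /ws insubN // -leqNgt. Qed.

Lemma ws_C N (S : {set 'I_N}) j : (j < N)%N -> ws (~: S) j = ~~ ws S j.
Proof. by move=> h; rewrite /ws insubT /= inE. Qed.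

Lemma card_rk N (A : {set 'I_N}) (j : nat) : (j <= N)%N ->
  #|[set x in A | (x < j)%N]| = rk (ws A) j.
Proof.
move=> hj; rewrite -sum1_card big_mkcond /=.
transitivity (\sum_(x < N) (if ws A x && (x < j)%N then 1 else 0))%N.
  by apply: eq_bigr => x _; rewrite !inE ws_ord.
rewrite -(big_mkord xpredT (fun a => if ws A a && (a < j)%N then 1 else 0)%N).
rewrite (big_cat_nat (leq0n j) hj) /= [X in (_ + X)%N]big1_seq ?addn0.
  by apply: eq_big_nat => a /andP[_ ->]; rewrite andbT; case: (ws A a).
by move=> a /andP[_]; rewrite mem_index_iota => /andP[h _]; rewrite ltnNge h andbF.
Qed.

Lemma card_full N (A : {set 'I_N}) : #|A| = rk (ws A) N.
Proof.
rewrite -card_rk //; apply: eq_card => x; by rewrite !inE ltn_ord andbT.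
Qed.

Section Shuf.
Variables (n1 n2 : nat) (S : {set 'I_(n1 + n2)}) (d1 : 'M[int]_n1) (d2 : 'M[int]_n2).

Definition Shf (i j : nat) : int :=
  if (i < n1)%N then (if ws S j then E d1 i (rk (ws S) j) else 0)
  else (if ~~ ws S j then E d2 (i - n1) (rkc (ws S) j) else 0).

Definition shufd : 'M[int]_(n1 + n2) := \matrix_(i, j) Shf i j.

Lemma E_shufd i j : (i < n1 + n2)%N -> (j < n1 + n2)%N -> E shufd i j = Shf i j.
Proof. by move=> hi hj; rewrite /E !insubT /= mxE. Qed.

Lemma supp_shufd : supp shufd = shuffle S (supp d1) (supp d2).
Proof.
apply/matrixP => i j; rewrite !mxE /Shf.
case: splitP => [i1|i2] hi; rewrite hi ws_ord.
  rewrite -(card_rk _ (ltnW (ltn_ord j))).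
 rewrite /E valK.
 case: (j \in S); last by rewrite andFb.
 rewrite andTb; case: insub => [k|]; last by [].
 by rewrite mxE.
rewrite addKn.
have -> : rkc (ws S) j = #|[set x in ~: S | (x < j)%N]|.
  rewrite (card_rk _ (ltnW (ltn_ord j))) /rkc; apply: (@eq_rk _ _ (n1 + n2)); last exact: ltnW (ltn_ord j).
  by move=> a ha; rewrite ws_C.
rewrite /E valK.
case: (j \in S); first by rewrite andFb.
rewrite andTb; case: insub => [k|]; last by [].
by rewrite mxE.
Qed.
Lemma shufd_asm : #|S| = n1 -> is_asm d1 -> is_asm d2 -> is_asm shufd.
Proof.
move=> hS a1 a2.
have hN1 : rk (ws S) (n1 + n2) = n1 by rewrite -card_full hS.
have hN2 : rkc (ws S) (n1 + n2) = n2.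
  by have := rk_rkc (ws S) (n1 + n2); rewrite hN1 => /eqP; rewrite eqn_add2l => /eqP.
apply/and3P; split.
- apply/forallP => i; apply/forallP => j; rewrite mxE /Shf.
  case: ifP => _; case: ifP => _; try exact: asm_entry; by [].
- apply/forallP => i; rewrite rowseqE.
  case: (ltnP i n1) => hi.
    rewrite (@filt_rk _ (E d1 i) (ws S)); last first.
      by move=> j hj; rewrite E_shufd // /Shf hi.
    rewrite hN1; have := a1 => /and3P[_ /forallP /(_ (Ordinal hi)) + _].
    by rewrite rowseqE.
  have hi2 : (i - n1 < n2)%N by rewrite ltn_subLR.
  rewrite (@filt_rk _ (E d2 (i - n1)) (fun a => ~~ ws S a)); last first.
    by move=> j hj; rewrite E_shufd // /Shf ltnNge hi.
  rewrite -/(rkc _ _) hN2; have := a2 => /and3P[_ /forallP /(_ (Ordinal hi2)) + _].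
  by rewrite rowseqE.
- apply/forallP => j; rewrite colseqE.
  case hw: (ws S j).
    have hj1 : (rk (ws S) j < n1)%N by move: (@rk_lt (ws S) j (n1 + n2) hw (ltn_ord j)); rewrite hN1.
    rewrite (@filt_rk _ (fun k => E d1 k (rk (ws S) j)) (fun a => (a < n1)%N)); last first.
      by move=> k hk; rewrite E_shufd // /Shf hw rk_ltn; case: ifP => // h; rewrite (minn_idPl (ltnW h)).
    rewrite rk_ltn (minn_idPr (leq_addr _ _)).
    have := a1 => /and3P[_ _ /forallP /(_ (Ordinal hj1))].
    by rewrite colseqE.
  have hj2 : (rkc (ws S) j < n2)%N.
    move: (@rk_lt (fun a => ~~ ws S a) j (n1 + n2) (negbT hw) (ltn_ord j)).
    by rewrite -[rk (fun a => ~~ ws S a) (n1 + n2)]/(rkc (ws S) (n1 + n2)) hN2.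
  rewrite (@filt_rk _ (fun k => E d2 k (rkc (ws S) j)) (fun a => (n1 <= a)%N)); last first.
    by move=> k hk; rewrite E_shufd // /Shf hw rk_geq; case: (leqP n1 k).
  rewrite rk_geq addKn.
  have := a2 => /and3P[_ _ /forallP /(_ (Ordinal hj2))].
  by rewrite colseqE.
Qed.

End Shuf.

Definition vt (r c : int) : option vtype :=
  if (r == 0) && (c == 0) then Some ne
  else if (r == 1) && (c == 0) then Some nw
  else if (r == 0) && (c == 1) then Some se
  else if (r == 1) && (c == 1) then Some sw
  else None.

Definition mt (s' : vtype) (o : option vtype) : bool :=
  match o with Some t => vtype_eqb t s' | None => false end.

Definition cntf s' n (f : nat -> nat -> int) : nat :=
  (\sum_(0 <= i < n) \sum_(0 <= j < n) ((f i j == 0) && mt s' (vt (Pr f i j) (Pc f j i))))%N.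

Lemma sum_lt_nat (F : nat -> int) n j : (j <= n)%N ->
  \sum_(j' < n | (j' < j)%N) F j' = \sum_(0 <= a < j) F a.
Proof.
move=> hj; rewrite -(big_mkord (fun a => (a < j)%N)) (big_cat_nat (leq0n j) hj) /=.
rewrite [X in _ + X]big1_seq ?addr0.
  by rewrite big_nat_cond [RHS]big_nat_cond; apply: eq_bigl => a; rewrite andbT andbb.
by move=> a /andP[+]; rewrite mem_index_iota => + /andP[h _]; rewrite ltnNge h.
Qed.

Lemma count_cntf s' n (d : 'M[int]_n) : count_type s' d = cntf s' n (E d).
Proof.
rewrite /count_type -sum1_card big_mkcond /=.
transitivity (\sum_(i : 'I_n) \sum_(j : 'I_n)
   ((d i j == 0) && mt s' (vtype_at d i j) : nat))%N.
  rewrite pair_big; apply: eq_bigr => -[i j] _; rewrite inE /=.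
  by case: (d i j == 0) => //; rewrite /mt; case: vtype_at.
rewrite /cntf big_mkord; apply: eq_bigr => i _.
rewrite big_mkord; apply: eq_bigr => j _; rewrite E_ord.
have -> : vtype_at d i j = vt (\sum_(j' < n | (j' < j)%N) d i j') (\sum_(i' < n | (i' < i)%N) d i' j) by [].
rewrite /Pr /Pc -(sum_lt_nat (fun a => E d i a) (ltnW (ltn_ord j))).
rewrite -(sum_lt_nat (fun a => E d a j) (ltnW (ltn_ord i))).
by congr (_ && mt _ (vt _ _)); apply: eq_bigr => k _; rewrite E_ord.
Qed.

Lemma cntf_eq s' n f g : (forall i j, (i < n)%N -> (j < n)%N -> f i j = g i j) ->
  cntf s' n f = cntf s' n g.
Proof.
move=> h; apply: eq_big_nat => i /andP[_ hi]; apply: eq_big_nat => j /andP[_ hj].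
rewrite h // /Pr /Pc.
rewrite (@eq_big_nat _ _ _ 0 j (fun a => f i a) (fun a => g i a)); last first.
  by move=> a /andP[_ ha]; rewrite h // (ltn_trans ha).
rewrite (@eq_big_nat _ _ _ 0 i (fun a => f a j) (fun a => g a j)) //.
by move=> a /andP[_ ha]; rewrite h // (ltn_trans ha).
Qed.

Definition topX s' n m : nat := match s' with ne => n - m | nw => m | _ => 0 end.
Definition botX s' n m : nat := match s' with se => n - m | sw => m | _ => 0 end.

Lemma mt_vt0 s' p : mt s' (vt p 0) = match s' with ne => p == 0 | nw => p == 1 | _ => false end.
Proof.
rewrite /vt eqxx !andbT /=.
case: (p =P 0) => [->|_] /=; first by case: s'.
by case: (p == 1); case: s'.
Qed.

Lemma mt_vt1 s' p : mt s' (vt p 1) = match s' with se => p == 0 | sw => p == 1 | _ => false end.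
Proof.
rewrite /vt !andbF /= !andbT.
case: (p =P 0) => [->|_] /=; first by case: s'.
by case: (p == 1); case: s'.
Qed.

Lemma cnt1 n (d : 'M[int]_n) m : is_asm d -> (m <= n)%N ->
  (\sum_(0 <= i < n) (Pr (E d) i m == 1))%N = m.
Proof.
move=> a hm; apply/eqP; rewrite -(eqr_nat int) natr_sum.
rewrite (@eq_big_nat _ _ _ 0 n _ (fun i => Pr (E d) i m)); last first.
  move=> i /andP[_ hi]; have := asm_row_pref a hi hm.
  by case/orP=> /eqP ->.
rewrite /Pr exchange_big /=.
rewrite (@eq_big_nat _ _ _ 0 m _ (fun _ => 1)); last first.
  by move=> a' /andP[_ ha]; have := asm_col_tot a (leq_trans ha hm).
by rewrite sumr_const_nat subn0.
Qed.

Lemma cnt0 n (d : 'M[int]_n) m : is_asm d -> (m <= n)%N ->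
  (\sum_(0 <= i < n) (Pr (E d) i m == 0))%N = (n - m)%N.
Proof.
move=> a hm; have := cnt1 a hm.
have : (\sum_(0 <= i < n) ((Pr (E d) i m == 0) + (Pr (E d) i m == 1)))%N = n.
  rewrite (@eq_big_nat _ _ _ 0 n _ (fun _ => 1%N)); last first.
    move=> i /andP[_ hi]; have := asm_row_pref a hi hm.
    by case/orP=> /eqP ->.
  by rewrite sum_nat_const_nat muln1 subn0.
rewrite big_split /= => hs h1; rewrite h1 in hs; lia.
Qed.

Lemma topsum n (d : 'M[int]_n) s' m : is_asm d -> (m <= n)%N ->
  (\sum_(0 <= i < n) mt s' (vt (Pr (E d) i m) 0))%N = topX s' n m.
Proof.
move=> a hm.
rewrite (@eq_big_nat _ _ _ 0 n _ (fun i => match s' with ne => Pr (E d) i m == 0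
   | nw => Pr (E d) i m == 1 | _ => false end : nat)); last by move=> i _; rewrite mt_vt0; case: s'.
case: s' => /=; try exact: cnt0; try exact: cnt1; by rewrite big1.
Qed.

Lemma botsum n (d : 'M[int]_n) s' m : is_asm d -> (m <= n)%N ->
  (\sum_(0 <= i < n) mt s' (vt (Pr (E d) i m) 1))%N = botX s' n m.
Proof.
move=> a hm.
rewrite (@eq_big_nat _ _ _ 0 n _ (fun i => match s' with se => Pr (E d) i m == 0
   | sw => Pr (E d) i m == 1 | _ => false end : nat)); last by move=> i _; rewrite mt_vt1; case: s'.
case: s' => /=; try exact: cnt0; try exact: cnt1; by rewrite big1.
Qed.

Lemma big_shift (R : Type) (idx : R) (op : Monoid.law idx) (F : nat -> R) a b :
  \big[op/idx]_(a <= i < a + b) F i = \big[op/idx]_(0 <= i < b) F (i + a).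
Proof. by rewrite -{1}[a]add0n big_addn addKn. Qed.

Lemma big1_nat (R : Type) (idx : R) (op : Monoid.law idx) (F : nat -> R) m n :
  (forall i, (m <= i < n)%N -> F i = idx) -> \big[op/idx]_(m <= i < n) F i = idx.
Proof. by move=> h; apply: big1_seq => i /andP[_]; rewrite mem_index_iota; apply: h. Qed.

Section Count.
Variables (n1 n2 : nat) (S : {set 'I_(n1 + n2)}) (d1 : 'M[int]_n1) (d2 : 'M[int]_n2).
Hypotheses (hS : #|S| = n1) (a1 : is_asm d1) (a2 : is_asm d2).

Local Notation w := (ws S).

Lemma hN1 : rk w (n1 + n2) = n1.
Proof. by rewrite -card_full hS. Qed.

Lemma hN2 : rkc w (n1 + n2) = n2.
Proof. by have := rk_rkc w (n1 + n2); rewrite hN1 => /eqP; rewrite eqn_add2l => /eqP. Qed.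

Lemma top_part s' :
  (\sum_(0 <= i < n1) \sum_(0 <= j < n1 + n2)
     ((Shf S d1 d2 i j == 0) && mt s' (vt (Pr (Shf S d1 d2) i j) (Pc (Shf S d1 d2) j i))))%N
  = (cntf s' n1 (E d1) + \sum_(0 <= j < n1 + n2) (if w j then 0 else topX s' n1 (rk w j)))%N.
Proof.
transitivity (\sum_(0 <= i < n1)
  (\sum_(0 <= j < n1 + n2) (if w j then
      ((E d1 i (rk w j) == 0) && mt s' (vt (Pr (E d1) i (rk w j)) (Pc (E d1) (rk w j) i)) : nat)
      else 0)
  + \sum_(0 <= j < n1 + n2) (if w j then 0 else mt s' (vt (Pr (E d1) i (rk w j)) 0) : nat)))%N.
  apply: eq_big_nat => i /andP[_ hi]; rewrite -big_split; apply: eq_big_nat => j /andP[_ hj] /=.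
  have ePr : Pr (Shf S d1 d2) i j = Pr (E d1) i (rk w j).
    by rewrite /Pr -sum_rk_int; apply: eq_bigr => a _; rewrite /Shf hi.
  have ePc : Pc (Shf S d1 d2) j i = if w j then Pc (E d1) (rk w j) i else 0.
    rewrite /Pc; case hw: (w j).
      by apply: eq_big_nat => a /andP[_ ha]; rewrite /Shf (ltn_trans ha hi) hw.
    by apply: big1_nat => a /andP[_ ha]; rewrite /Shf (ltn_trans ha hi) hw.
  rewrite ePr ePc /Shf hi; case: (w j) => /=.
    by rewrite addn0.
  by rewrite add0n.
rewrite big_split /=; congr (_ + _)%N.
  rewrite /cntf; apply: eq_big_nat => i _.
  by rewrite (sum_rk_nat w (fun k => ((E d1 i k == 0) &&
     mt s' (vt (Pr (E d1) i k) (Pc (E d1) k i)) : nat))) hN1.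
rewrite exchange_big /=; apply: eq_big_nat => j /andP[_ hj].
case: (w j) => /=; first by rewrite big1.
apply: topsum a1 _; exact: leq_trans (rk_mono w (ltnW hj)) (eq_leq hN1).
Qed.

Lemma bot_part s' :
  (\sum_(0 <= i < n2) \sum_(0 <= j < n1 + n2)
     ((Shf S d1 d2 (i + n1) j == 0) &&
       mt s' (vt (Pr (Shf S d1 d2) (i + n1) j) (Pc (Shf S d1 d2) j (i + n1)))))%N
  = (cntf s' n2 (E d2) + \sum_(0 <= j < n1 + n2) (if ~~ w j then 0 else botX s' n2 (rkc w j)))%N.
Proof.
have eS : forall i a, Shf S d1 d2 (i + n1) a = if ~~ w a then E d2 i (rkc w a) else 0.
  by move=> i a; rewrite /Shf ltnNge leq_addl /= addnK.
transitivity (\sum_(0 <= i < n2)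
  (\sum_(0 <= j < n1 + n2) (if ~~ w j then
      ((E d2 i (rkc w j) == 0) && mt s' (vt (Pr (E d2) i (rkc w j)) (Pc (E d2) (rkc w j) i)) : nat)
      else 0)
  + \sum_(0 <= j < n1 + n2) (if ~~ w j then 0 else mt s' (vt (Pr (E d2) i (rkc w j)) 1) : nat)))%N.
  apply: eq_big_nat => i /andP[_ hi]; rewrite -big_split; apply: eq_big_nat => j /andP[_ hj] /=.
  have ePr : Pr (Shf S d1 d2) (i + n1) j = Pr (E d2) i (rkc w j).
    by rewrite /Pr /rkc -(sum_rk_int (fun a => ~~ w a)); apply: eq_bigr => a _; rewrite eS.
  have ePc : Pc (Shf S d1 d2) j (i + n1) = if w j then 1 else Pc (E d2) (rkc w j) i.
    rewrite /Pc addnC (big_cat_nat (leq0n n1) (leq_addr i n1)) /= [X in _ + X]big_shift.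
    case hw: (w j) => /=.
      rewrite [X in _ + X]big1_nat ?addr0; last by move=> a _; rewrite eS hw.
      have hj1 : (rk w j < n1)%N by move: (@rk_lt w j (n1 + n2) hw hj); rewrite hN1.
      rewrite -(asm_col_tot a1 hj1); apply: eq_big_nat => a /andP[_ ha].
      by rewrite /Shf ha hw.
    rewrite [X in X + _]big1_nat ?add0r; last first.
      by move=> a /andP[_ ha]; rewrite /Shf ha hw.
    by apply: eq_bigr => a _; rewrite eS hw.
  rewrite ePr ePc eS; case: (w j) => /=.
    by rewrite add0n.
  by rewrite addn0.
rewrite big_split /=; congr (_ + _)%N.
  rewrite /cntf; apply: eq_big_nat => i _.
  rewrite /rkc (sum_rk_nat (fun a => ~~ w a) (fun k => ((E d2 i k == 0) &&
     mt s' (vt (Pr (E d2) i k) (Pc (E d2) k i)) : nat))).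
  by rewrite -/(rkc w (n1 + n2)) hN2.
rewrite exchange_big /=; apply: eq_big_nat => j /andP[_ hj].
case: (w j) => /=; last by rewrite big1.
apply: botsum a2 _; exact: leq_trans (rk_mono (fun a => ~~ w a) (ltnW hj)) (eq_leq hN2).
Qed.

Lemma cnt_shuf s' :
  count_type s' (shufd S d1 d2) = (count_type s' d1 + count_type s' d2 +
    (\sum_(0 <= j < n1 + n2) (if w j then 0 else topX s' n1 (rk w j)) +
     \sum_(0 <= j < n1 + n2) (if ~~ w j then 0 else botX s' n2 (rkc w j))))%N.
Proof.
rewrite !count_cntf (cntf_eq _ (g := Shf S d1 d2)); last by move=> i j hi hj; rewrite E_shufd.
rewrite {1}/cntf (big_cat_nat (leq0n n1) (leq_addr n2 n1)) /= [X in (_ + X)%N]big_shift.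
by rewrite top_part bot_part addnACA.
Qed.

End Count.

Section Q.
Variable K : fieldType.
Local Notation q := (qvar K).

Lemma qint_tofrac n : qint K n = tofrac (\sum_(i < n) ('X : {poly K}) ^+ i).
Proof.
rewrite /qint /qvar rmorph_sum; apply: eq_bigr => i _; rewrite rmorphXn; reflexivity.
Qed.

Lemma qint_neq0 n : qint K n.+1 != 0.
Proof.
rewrite qint_tofrac tofrac_eq0; apply/eqP => h.
have := congr1 (fun p : {poly K} => p.[0]) h; rewrite horner0 horner_sum big_ord_recl.
rewrite hornerXn expr0 big1 ?addr0; first by move/eqP; rewrite oner_eq0.
by move=> i _; rewrite hornerXn expr0n.
Qed.

Lemma qfactS n : qfact K n.+1 = qfact K n * qint K n.+1.
Proof. rewrite /qfact big_ord_recr; reflexivity. Qed.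

Lemma qfact0 : qfact K 0 = 1.
Proof. rewrite /qfact big_ord0; reflexivity. Qed.

Lemma qfact_neq0 n : qfact K n != 0.
Proof.
elim: n => [|n IH]; first by rewrite qfact0; exact: oner_neq0.
rewrite qfactS; apply: mulf_neq0; [exact: IH | exact: qint_neq0].
Qed.

Lemma qint_add a b : qint K (a + b) = qint K a + q ^+ a * qint K b.
Proof.
rewrite /qint big_split_ord /= mulr_sumr; congr (_ + _); apply: eq_bigr => i _.
by rewrite exprD.
Qed.

End Q.

Lemma qid (F : fieldType) (f a b ka mb x : F) : a != 0 -> b != 0 -> ka != 0 -> mb != 0 ->
  f * (mb + x * ka) / (a * ka * (b * mb)) = f / (a * ka * b) + x * (f / (a * (b * mb))).
Proof. move=> *; field; by apply/and4P. Qed.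

Section Q2.
Variable K : fieldType.
Local Notation q := (qvar K).

Definition Q N k : {fraction {poly K}} :=
  if (k <= N)%N then qfact K N / (qfact K k * qfact K (N - k)) else 0.

Lemma Q0 N : Q N 0 = 1.
Proof. by rewrite /Q leq0n qfact0 subn0 mul1r divff // qfact_neq0. Qed.

Lemma QN N : Q N N = 1.
Proof. by rewrite /Q leqnn subnn qfact0 mulr1 divff // qfact_neq0. Qed.

Lemma Q_rec N k : Q N.+1 k = Q N k + (if k is k'.+1 then q ^+ (N - k') * Q N k' else 0).
Proof.
case: k => [|k']; first by rewrite !Q0 addr0.
case: (ltngtP k' N) => hk.
- have [m hm] : exists m, N = (k' + m.+1)%N by exists (N - k'.+1)%N; lia.
  subst N.
  have h1 : (k'.+1 <= (k' + m.+1).+1)%N by lia.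
  have h2 : (k'.+1 <= k' + m.+1)%N by lia.
  have h3 : (k' <= k' + m.+1)%N by lia.
  rewrite /Q h1 h2 h3 !subSS.
  have -> : (k' + m.+1 - k' = m.+1)%N by lia.
  have -> : (k' + m.+1 - k'.+1 = m)%N by lia.
  rewrite qfactS (qfactS K k') (qfactS K m).
  have -> : qint K (k' + m.+1).+1 = qint K m.+1 + q ^+ m.+1 * qint K k'.+1.
    by rewrite -qint_add; congr qint; lia.
  apply: qid; exact: qfact_neq0 || exact: qint_neq0.
- have f1 : ~~ (k'.+1 <= N.+1)%N by lia.
  have f2 : ~~ (k'.+1 <= N)%N by lia.
  have f3 : ~~ (k' <= N)%N by lia.
  by rewrite /Q (negbTE f1) (negbTE f2) (negbTE f3) mulr0 addr0.
- by subst k'; rewrite subnn expr0 mul1r !QN /Q ltnn add0r.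
Qed.

End Q2.

Definition Af (w : nat -> bool) N : nat := (\sum_(0 <= j < N) (if w j then rkc w j else 0))%N.

Lemma swap_rk (w : nat -> bool) J :
  (\sum_(0 <= j < J) (if w j then 0 else rk w J - rk w j))%N = Af w J.
Proof.
elim: J => [|J IH]; first by rewrite /Af !big_geq.
rewrite /Af !big_nat_recr //= rkS.
case hw: (w J) => /=.
  rewrite addn0; transitivity ((\sum_(0 <= j < J) (if w j then 0 else rk w J - rk w j))
     + \sum_(0 <= j < J) (if w j then 0 else 1))%N.
    rewrite -big_split; apply: eq_big_nat => j /andP[_ hj]; case: (w j) => //=.
    have := rk_mono w (ltnW hj); lia.
  rewrite IH /Af; congr (_ + _)%N; rewrite /rkc /rk; apply: eq_bigr => j _; by case: (w j).
rewrite addn0 subnn !addn0 IH.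
by [].
Qed.

Lemma Af_eq (w w' : nat -> bool) N : (forall a, (a < N)%N -> w a = w' a) -> Af w N = Af w' N.
Proof.
move=> h; apply: eq_big_nat => j /andP[_ hj]; rewrite (h j hj) /rkc.
rewrite (@eq_rk (fun a => ~~ w a) (fun a => ~~ w' a) N _ j (ltnW hj)) //.
by move=> a ha; rewrite h.
Qed.

Definition wf (s' : vtype) (w : nat -> bool) : nat -> bool :=
  match s' with ne | sw => w | _ => fun a => ~~ w a end.

Lemma ext_Af s' (w : nat -> bool) N n1 n2 : rk w N = n1 -> rkc w N = n2 ->
  (\sum_(0 <= j < N) (if w j then 0 else topX s' n1 (rk w j)) +
   \sum_(0 <= j < N) (if ~~ w j then 0 else botX s' n2 (rkc w j)))%N = Af (wf s' w) N.
Proof.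
move=> h1 h2; case: s' => /=.
- rewrite [X in (_ + X)%N]big1 ?addn0; last by move=> j _; case: (~~ w j).
  by rewrite -h1 swap_rk.
- rewrite [X in (_ + X)%N]big1 ?addn0; last by move=> j _; case: (~~ w j).
  apply: eq_bigr => j _; case: (w j) => //=; rewrite /rkc /rk; apply: eq_bigr => a _.
  by rewrite negbK.
- rewrite [X in (X + _)%N]big1 ?add0n; last by move=> j _; case: (w j).
  by rewrite -h2 /rkc swap_rk.
- rewrite [X in (X + _)%N]big1 ?add0n; last by move=> j _; case: (w j).
  by apply: eq_bigr => j _; case: (w j).
Qed.

Lemma ws_small M (A : {set 'I_M}) j (hj : (j < M)%N) : ws A j = (Ordinal hj \in A).
Proof. by rewrite /ws insubT. Qed.

Lemma big_pair (R : Type) (idx : R) (op : Monoid.com_law idx) (T : finType) (G : bool * T -> R) :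
  \big[op/idx]_(b : bool) \big[op/idx]_(t : T) G (b, t) = \big[op/idx]_(p : bool * T) G p.
Proof. by rewrite pair_big; apply: eq_bigr => -[b t]. Qed.

Section GA.
Variable K : fieldType.
Local Notation q := (qvar K).

Section Step.
Variable N : nat.
Definition hS (p : bool * {set 'I_N}) : {set 'I_N.+1} :=
  [set x : 'I_N.+1 | if (x < N)%N then ws p.2 x else p.1].
Definition hSi (S : {set 'I_N.+1}) : bool * {set 'I_N} := (ws S N, [set y : 'I_N | ws S y]).

Lemma ws_h b T j : (j < N)%N -> ws (hS (b, T)) j = ws T j.
Proof.
move=> hj; have hj' : (j < N.+1)%N by exact: ltnW.
by rewrite (ws_small _ hj') inE /= hj.
Qed.

Lemma ws_hN b T : ws (hS (b, T)) N = b.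
Proof. by rewrite (ws_small _ (ltnSn N)) inE /= ltnn. Qed.

Lemma hS_bij : bijective hS.
Proof.
exists hSi.
  move=> [b T]; rewrite /hSi ws_hN; congr pair; apply/setP => y.
  by rewrite inE ws_h ?ltn_ord // ws_ord.
move=> S; apply/setP => x; rewrite inE /=; case: ltnP => hx.
  by rewrite (ws_small _ hx) inE /= ws_ord.
have ex : nat_of_ord x = N by have := ltn_ord x; lia.
have -> : ws S N = ws S x by rewrite ex.
by rewrite ws_ord.
Qed.

Lemma card_h b T : #|hS (b, T)| = (#|T| + b)%N.
Proof.
rewrite !card_full rkS ws_hN; congr (_ + _)%N; apply: (@eq_rk _ _ N) => // a ha.
exact: ws_h.
Qed.

Lemma Af_h b T : Af (ws (hS (b, T))) N.+1 = (Af (ws T) N + (if b then N - #|T| else 0))%N.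
Proof.
rewrite /Af big_nat_recr //= ws_hN; congr (_ + _)%N.
  apply: eq_big_nat => j /andP[_ hj]; rewrite ws_h // /rkc.
  rewrite (@eq_rk (fun a => ~~ ws (hS (b, T)) a) (fun a => ~~ ws T a) N _ j (ltnW hj)) //.
  by move=> a ha; rewrite ws_h.
case: b => //; rewrite /rkc (@eq_rk (fun a => ~~ ws (hS (true, T)) a) (fun a => ~~ ws T a) N _ N (leqnn N)).
  by rewrite -/(rkc (ws T) N) card_full; have := rk_rkc (ws T) N; lia.
by move=> a ha; rewrite ws_h.
Qed.

End Step.

Lemma GA N k : \sum_(S : {set 'I_N} | #|S| == k) q ^+ Af (ws S) N = Q K N k.
Proof.
elim: N k => [|N IH] k.
  case: k => [|k].
    rewrite (big_pred1 set0); last by move=> S; rewrite /= cards_eq0.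
    by rewrite /Af big_geq // expr0 Q0.
  rewrite big_pred0; last by move=> S; have := max_card (mem S); rewrite card_ord; case: #|S|.
  by rewrite /Q.
rewrite (reindex (@hS N)); last exact: onW_bij (@hS_bij N).
rewrite big_mkcond -big_pair big_bool /= Q_rec addrC; congr (_ + _).
  rewrite (eq_bigr (fun T : {set 'I_N} => if #|T| == k then q ^+ Af (ws T) N else 0)); last first.
    by move=> T _; rewrite card_h Af_h !addn0.
  rewrite -IH [RHS]big_mkcond; reflexivity.
case: k => [|k].
  by apply: big1 => T _; rewrite card_h addn1.
rewrite (eq_bigr (fun T : {set 'I_N} => q ^+ (N - k) * (if #|T| == k then q ^+ Af (ws T) N else 0))); last first.
  move=> T _; rewrite card_h Af_h addn1 eqSS; case: eqP => [e|_]; last by rewrite mulr0.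
  by rewrite e exprD mulrC.
rewrite -IH [X in _ = _ * X]big_mkcond mulr_sumr; reflexivity.
Qed.

Lemma GB N k : (k <= N)%N ->
  \sum_(S : {set 'I_N} | #|S| == k) q ^+ Af (fun a => ~~ ws S a) N = Q K N k.
Proof.
move=> hk; rewrite (reindex_inj (@setC_inj _)) /=.
have hc : forall S : {set 'I_N}, #|~: S| = (N - #|S|)%N.
  by move=> S; have := cardsC S; rewrite card_ord; lia.
rewrite (eq_bigl (fun S : {set 'I_N} => #|S| == N - k)%N); last first.
  move=> S /=; rewrite hc; have h := subset_leq_card (subsetT S).
  rewrite cardsT card_ord in h.
  by apply/eqP/eqP => [<-|->]; rewrite subKn.
rewrite (eq_bigr (fun S : {set 'I_N} => q ^+ Af (ws S) N)); last first.
  move=> S _; congr (_ ^+ _); apply: Af_eq => a ha; by rewrite ws_C // negbK.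
rewrite GA /Q leq_subr hk subKn //; congr (_ / _); exact: mulrC.
Qed.

End GA.

Lemma fin_id (F : fieldType) (x y f a b : F) : f != 0 -> a != 0 -> b != 0 ->
  x * y / f * (f / (a * b)) = x / a * (y / b).
Proof. move=> *; field; by apply/and3P. Qed.

Lemma main_part K s' n1 n2 (d1 : 'M[int]_n1) (d2 : 'M[int]_n2) :
  is_asm d1 -> is_asm d2 ->
  \sum_(S : {set 'I_(n1 + n2)} | #|S| == n1)
     phiPM K s' (shuffle S (supp d1) (supp d2))
  = phiPM K s' (supp d1) * phiPM K s' (supp d2).
Proof.
move=> a1 a2; rewrite !phiPM_supp //.
rewrite (eq_bigr (fun S => phiASM K s' (shufd S d1 d2))); last first.
  by move=> S /eqP e; rewrite -supp_shufd phiPM_supp // shufd_asm.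
rewrite (eq_bigr (fun S : {set 'I_(n1 + n2)} => qvar K ^+ (count_type s' d1 + count_type s' d2)
    / qfact K (n1 + n2) * qvar K ^+ Af (wf s' (ws S)) (n1 + n2))); last first.
  move=> S /eqP e; rewrite /phiASM (cnt_shuf e a1 a2 s').
  rewrite (ext_Af s' (@hN1 n1 n2 S e) (@hN2 n1 n2 S e)) exprD; exact: mulrAC.
rewrite -mulr_sumr.
have hG : \sum_(S : {set 'I_(n1 + n2)} | #|S| == n1) qvar K ^+ Af (wf s' (ws S)) (n1 + n2)
    = Q K (n1 + n2) n1.
  case: s' => /=; [exact: GA | exact: GB (leq_addr _ _) | exact: GB (leq_addr _ _) | exact: GA].
rewrite hG /Q leq_addr addKn /phiASM exprD.
apply: fin_id; exact: qfact_neq0.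
Qed.

Theorem proposition4p4 (K : fieldType) (hK : [pchar K] =i pred0) (s' : vtype) :
  phiPM K s' (const_mx false : 'M[bool]_0) = 1 /\
  (forall (n1 n2 : nat) (d1 : 'M[int]_n1) (d2 : 'M[int]_n2),
     is_asm d1 -> is_asm d2 ->
     \sum_(S : {set 'I_(n1 + n2)} | #|S| == n1)
        phiPM K s' (shuffle S (supp d1) (supp d2))
     = phiPM K s' (supp d1) * phiPM K s' (supp d2)).
Proof.
split; last exact: main_part.
have e0 : (const_mx false : 'M[bool]_0) = supp (const_mx 0 : 'M[int]_0).
  by apply/matrixP => -[].
have a0 : is_asm (const_mx 0 : 'M[int]_0).
  by apply/and3P; split; apply/forallP => -[].
rewrite e0 phiPM_supp // /phiASM count_cntf /cntf big_geq // expr0 qfact0.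
exact: divr1.
Qed.
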